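(* For $n\ge1$ and $0\le k<n$, $$|\mathbf{I}_{n,k}(110)|=|\mathbf{I}_{n-1}(110)|-\sum_{j=k+1}^{n-3}|\mathbf{I}_{n-2,j}(110)|.$$
   Context: An inversion sequence of length $n$ is an integer sequence $e=e_1\dots e_n$ with $0\le e_i<i$ for all $i$; $\mathbf{I}_n$ denotes the set of these. The reduction of an integer word replaces every occurrence of its $i$-th smallest distinct value by $i-1$. $e$ contains the consecutive pattern $p$ of length $m$ if some $e_i\dots e_{i+m-1}$ has reduction $p$, and avoids it otherwise; $\mathbf{I}_n(p)$ is the set of $e\in\mathbf{I}_n$ avoiding $p$ (so avoiding $110$ means no $i$ with $e_i=e_{i+1}>e_{i+2}$). $\mathbf{I}_{n,k}(p)=\{e\in\mathbf{I}_n(p):e_n=k\}$, which is empty for $k\ge n$. Conventions: $|\mathbf{I}_0(p)|=1$ and $|\mathbf{I}_{n,j}(p)|=0$ whenever $n\le 0$ (as $j\ge n$) or $n<0$; empty sums are $0$. *)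

(* Defs.v *)
From mathcomp Require Import all_boot all_algebra.
Set Implicit Arguments. Unset Strict Implicit. Unset Printing Implicit Defensive.

(* Inversion sequences are represented as [seq nat]; position i (0-indexed)
   corresponds to e_{i+1}, so the condition 0 <= e_{i+1} < i+1 reads
   nth 0 e i < i.+1. *)
Definition is_invseq (n : nat) (e : seq nat) : bool :=
  (size e == n) && all (fun i => nth 0 e i < i.+1) (iota 0 n).

Definition reduction (w : seq nat) : seq nat :=
  [seq count (fun y => y < x) (undup w) | x <- w].

Definition contains_consec (p e : seq nat) : bool :=
  has (fun i => reduction (take (size p) (drop i e)) == p)
      (iota 0 (size e - size p).+1) && (size p <= size e).

Definition avoids (p e : seq nat) : bool := ~~ contains_consec p e.

(* All inversion sequences of length n, built by appending a last entry
   e_n in {0,...,n-1}; a list containing each element of I_n exactly once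
   (entries are filtered again by is_invseq below). *)
Fixpoint candidates (n : nat) : seq (seq nat) :=
  if n is m.+1 then
    flatten [seq [seq rcons e x | x <- iota 0 n] | e <- candidates m]
  else [:: [::]].

Definition cntI (p : seq nat) (n : nat) : nat :=
  count (fun e => is_invseq n e && avoids p e) (candidates n).

Definition cntIk (p : seq nat) (n k : nat) : nat :=
  count (fun e => [&& is_invseq n e, avoids p e & last 0 e == k])
        (candidates n).

Definition pat110 : seq nat := [:: 1; 1; 0].

Example ex1 : cntI pat110 3 = 6%N. Proof. by vm_compute. Qed.
Example ex2 : cntI pat110 0 = 1%N. Proof. by vm_compute. Qed.
Example ex3 : cntI pat110 4 = 23%N. Proof. by vm_compute. Qed.
Example ex4 : cntIk pat110 4 0 = 5%N. Proof. by vm_compute. Qed.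

(* Main.v *)
Require Import Defs.
From mathcomp Require Import all_boot all_algebra zify.
Import GRing.Theory.

Definition B (a b c : nat) : bool := (a == b) && (c < b).
Lemma red3 a b c : (reduction [:: a; b; c] == [:: 1; 1; 0]) = B a b c.
Proof.
rewrite /reduction /B /=.
case: (ltngtP a b) => ab; case: (ltngtP b c) => bc; case: (ltngtP a c) => ac;
  try (exfalso; lia); subst;
  rewrite ?inE ?eqxx ?ltnn ?ab ?bc ?ac ?(ltn_eqF ab) ?(gtn_eqF ab) ?(ltn_eqF bc) ?(gtn_eqF bc) ?(ltn_eqF ac) ?(gtn_eqF ac) /= ?inE ?eqxx ?ltnn ?ab ?bc ?ac ?(ltn_eqF ab) ?(gtn_eqF ab) ?(ltn_eqF bc) ?(gtn_eqF bc) ?(ltn_eqF ac) ?(gtn_eqF ac) //=.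
all: rewrite ?ltnNge ?(ltnW ab) ?(ltnW bc) ?(ltnW ac) ?leqnn //=.
all: try lia.
all: idtac.

Qed.
Definition bad (e : seq nat) : bool :=
  has (fun i => B (nth 0 e i) (nth 0 e i.+1) (nth 0 e i.+2)) (iota 0 (size e - 2)).

Lemma contains_bad e : contains_consec pat110 e = bad e.
Proof.
rewrite /contains_consec /bad; change (size pat110) with 3.
case: (leqP 3 (size e)) => h3; last first.
  rewrite andbF; have -> : size e - 2 = 0 by lia. by [].
rewrite andbT; have -> : (size e - 3).+1 = size e - 2 by lia.
apply: eq_in_has => i; rewrite mem_iota add0n => /andP[_ hi].
rewrite (drop_nth 0) ?(drop_nth 0 (n:=i.+1)) ?(drop_nth 0 (n:=i.+2)); try lia.
by rewrite -red3; case: (drop i.+3 e).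
Qed.

Lemma bad_rcons e x : bad (rcons e x) =
  bad e || ((1 < size e) && B (nth 0 e (size e - 2)) (nth 0 e (size e - 1)) x).
Proof.
rewrite /bad size_rcons.
case: (leqP 2 (size e)) => h2; last first.
  have -> : (size e).+1 - 2 = 0 by lia. have -> : size e - 2 = 0 by lia. by [].
have -> : (size e).+1 - 2 = (size e - 2) + 1 by lia.
rewrite iotaD has_cat /= orbF add0n.
congr (_ || _).
  apply: eq_in_has => i; rewrite mem_iota add0n => /andP[_ hi].
  have h1 : i < size e by lia. have h2' : i.+1 < size e by lia. have h3 : i.+2 < size e by lia.
  by rewrite !nth_rcons h1 h2' h3.
rewrite !nth_rcons.
have -> : size e - 2 < size e by lia.
have -> : (size e - 2).+1 < size e by lia.
have -> : (size e - 2).+2 < size e = false by lia.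
have -> : (size e - 2).+2 == size e by lia.
have -> : (size e - 2).+1 = size e - 1 by lia.
by [].
Qed.
Lemma is_inv_rcons n e x : is_invseq n.+1 (rcons e x) = is_invseq n e && (x < n.+1).
Proof.
rewrite /is_invseq size_rcons eqSS.
case: (eqVneq (size e) n) => [hs|hs]; last by [].
rewrite !andTb.
have -> : iota 0 n.+1 = iota 0 n ++ [:: n] by rewrite -addn1 iotaD.
rewrite all_cat /= andbT.
congr (_ && _).
  apply: eq_in_all => i; rewrite mem_iota add0n => /andP[_ hi].
  by rewrite nth_rcons hs hi.
by rewrite nth_rcons hs ltnn eqxx.
Qed.

Lemma count_cand (F : pred (seq nat)) n : count F (candidates n.+1) =
  \sum_(e <- candidates n) count (fun x => F (rcons e x)) (iota 0 n.+1).
Proof.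
have -> : candidates n.+1 = flatten [seq [seq rcons e x | x <- iota 0 n.+1] | e <- candidates n] by [].
rewrite count_flatten sumnE big_map big_map; apply: eq_bigr => e _.
by rewrite count_map.
Qed.

Lemma count_pick (G : pred nat) N k : k < N ->
  count (fun x => G x && (x == k)) (iota 0 N) = G k.
Proof.
move=> hk.
rewrite (eq_count (a2 := fun x => G k && (x == k))); last first.
  by move=> x /=; case: eqP => [->|]; rewrite ?andbF ?andbT.
case: (G k); last by rewrite count_pred0.
rewrite (eq_count (a2 := pred1 k)) // count_uniq_mem ?iota_uniq //.
by rewrite mem_iota hk.
Qed.

Lemma sum_ind a b y : \sum_(a <= j < b) (y == j) = (a <= y < b).
Proof.
elim: b => [|b IH]; first by rewrite big_geq // ltn0 andbF.
case: (leqP a b) => hab.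
  rewrite big_nat_recr //= IH.
  case: (ltngtP y b) => h.
  - by rewrite andbT addn0 /= ltnS (ltnW h) andbT.
  - by rewrite andbF /= ltnS (leqNgt y b) h andbF.
  - by rewrite h andbF ltnSn andbT hab.
rewrite big_geq; last by [].
case: (leqP a y) => //= h; rewrite ltnS leqNgt.
by rewrite (leq_trans hab h).
Qed.

Definition T (e : seq nat) (x : nat) : bool :=
  (1 < size e) && B (nth 0 e (size e - 2)) (nth 0 e (size e - 1)) x.

Lemma avoids_rcons e x : avoids pat110 (rcons e x) = avoids pat110 e && ~~ T e x.
Proof. by rewrite /avoids !contains_bad bad_rcons negb_or. Qed.

Lemma sum_count (s : seq (seq nat)) (b : pred (seq nat)) :
  \sum_(e <- s) (b e : nat) = count b s.
Proof. by elim: s => [|x s IH]; rewrite ?big_nil ?big_cons //= IH. Qed.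

Lemma count_split (a b : pred (seq nat)) s :
  count (fun x => a x && ~~ b x) s + count (fun x => a x && b x) s = count a s.
Proof.
elim: s => [|x s IH] //=.
rewrite -IH; case: (a x); case: (b x) => /=; lia.
Qed.

Lemma inv_size n e : is_invseq n e -> size e = n.
Proof. by case/andP => /eqP. Qed.

Lemma inv_nth n e i : is_invseq n e -> i < n -> nth 0 e i < i.+1.
Proof.
case/andP => _ /allP H hi; apply: H; by rewrite mem_iota add0n.
Qed.

Arguments inv_size {n e}.
Arguments inv_nth {n e i}.

Lemma step1 m k : k < m.+1 ->
  cntIk pat110 m.+1 k =
  count (fun e => (is_invseq m e && avoids pat110 e) && ~~ T e k) (candidates m).
Proof.
move=> hk; rewrite /cntIk count_cand -sum_count; apply: eq_bigr => e _.
rewrite (eq_count (a2 := fun x => ((is_invseq m e && avoids pat110 e && ~~ T e x) && (x < m.+1)) && (x == k))); last first.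
  move=> x /=; rewrite is_inv_rcons avoids_rcons last_rcons.
  by case: (is_invseq m e); case: (avoids pat110 e); case: (x < m.+1); case: (T e x).
by rewrite count_pick // hk andbT.
Qed.

Lemma step2 m k :
  count (fun e => (is_invseq m e && avoids pat110 e) && T e k) (candidates m) =
  \sum_(k.+1 <= j < m - 1) cntIk pat110 (m - 1) j.
Proof.
case: m => [|r].
  by rewrite big_geq.
have -> : r.+1 - 1 = r by lia.
rewrite count_cand.
rewrite /cntIk.
under [RHS]eq_bigr => j _ do rewrite -sum_count.
rewrite exchange_big; apply: eq_bigr => e _.
case Hi: (is_invseq r e); last first.
  rewrite big1 //.
  rewrite (eq_count (a2 := pred0)) ?count_pred0 //.
  by move=> x /=; rewrite is_inv_rcons Hi.
have hs := inv_size Hi.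
move: Hi hs; case: r => [|r] Hi hs.
  rewrite big_geq //.
  rewrite (eq_count (a2 := pred0)) ?count_pred0 //.
  by move=> x /=; rewrite /T size_rcons hs /= !andbF.
set y := last 0 e.
have hy : y < r.+1.
  rewrite /y -(nth_last 0) hs /=; exact: (inv_nth Hi).
rewrite (eq_count (a2 := fun x => (avoids pat110 e && (k < x)) && (x == y))); last first.
  move=> x /=; rewrite is_inv_rcons Hi avoids_rcons /T size_rcons hs /=.
  rewrite !nth_rcons hs.
  have -> : r.+2 - 2 = r by lia.
  have -> : r.+2 - 1 = r.+1 by lia.
  rewrite ltnSn ltnn eqxx.
  have -> : r.+1 - 2 = r - 1 by lia.
  have -> : r.+1 - 1 = r by lia.
  have hl : nth 0 e r = y by rewrite /y -(nth_last 0) hs.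
  rewrite hl /B.
  case: (eqVneq y x) => [<-|hne]; rewrite ?eqxx ?ltnn ?andbF ?andbT /=.
    by rewrite (ltn_trans hy (ltnSn _)).
  by [].
rewrite count_pick; last by apply: ltn_trans hy _.
case: (avoids pat110 e) => /=; last by rewrite big1.
by rewrite sum_ind hy andbT.
Qed.

Lemma main_nat m k : k < m.+1 ->
  cntI pat110 m = cntIk pat110 m.+1 k + \sum_(k.+1 <= j < m - 1) cntIk pat110 (m - 1) j.
Proof.
move=> hk; rewrite step1 // -step2 count_split.
by [].
Qed.

Local Open Scope ring_scope.

Theorem mainTheorem10 (n k : nat) (hn : (1 <= n)%N) (hk : (k < n)%N) :
  (cntIk pat110 n k)%:Z =
    (cntI pat110 n.-1)%:Z - \sum_(k.+1 <= j < n - 2) (cntIk pat110 (n - 2) j)%:Z.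
Proof.
case: n hn hk => [|m] // _ hk.
have -> : (m.+1 - 2 = m - 1)%N by lia.
rewrite /= (main_nat _ _ hk) PoszD.
rewrite -(big_morph Posz PoszD (erefl _)).
by rewrite addrK.
Qed.
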